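(* Let $C_1$ and $C_2$ be constant-time two-sided error PACAs. Then there are constant-time two-sided error PACAs $C_\cup$ and $C_\cap$ such that $L(C_\cup)=L(C_1)\cup L(C_2)$ and $L(C_\cap)=L(C_1)\cap L(C_2)$.
   Context: PACA: a bounded one-dimensional CA with state set $Q$, input alphabet $\Sigma\subseteq Q$, accepting states $A\subseteq Q$, boundary symbol $\$$ and two local transition functions $\delta_0,\delta_1$; at each step every cell independently tosses a fair coin $c$ and updates by $\delta_c$ applied to its left neighbor, itself and its right neighbor ($\$$ beyond borders). A computation on input $x\in\Sigma^n$ is accepting if at some step all cells are simultaneously in $A$. Time complexity $T$: every accepting computation on inputs of length $n$ first reaches $A^n$ at a step $<T(n)$; constant-time means $T$ is bounded by a constant. A two-sided error PACA $C$ for $L$ accepts every $x\in L$ with probability $\ge2/3$ and every $x\notin L$ with probability $\le1/3$; $L(C)=L$. *)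

(* Defs.v *)
From HB Require Import structures.
From mathcomp Require Import all_boot all_order all_algebra.
From mathcomp Require Import classical_sets boolp reals Rstruct.
From Stdlib Require Rdefinitions.

Set Implicit Arguments.
Unset Strict Implicit.
Unset Printing Implicit Defensive.

Import Order.TTheory GRing.Theory Num.Theory.
Local Open Scope ring_scope.

(* A PACA over input alphabet Sigma.
   - Q      : finite state set
   - inj    : the inclusion Sigma \subseteq Q (injective)
   - acc    : the set A of accepting states
   - delta b: the local transition function delta_b; a neighbour [None]
              stands for the boundary symbol $. *)
Record PACA (Sigma : finType) := MkPACA {
  Q : finType;
  inj : Sigma -> Q;
  inj_injective : injective inj;
  acc : pred Q;
  delta : bool -> option Q -> Q -> option Q -> Q
}.

Section PACA_semantics.
Variables (Sigma : finType) (C : PACA Sigma).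

Definition config (n : nat) := {ffun 'I_n -> Q C}.
Definition coins (n : nat) := {ffun 'I_n -> bool}.

Definition step n (c : coins n) (x : config n) : config n :=
  [ffun i : 'I_n =>
     @delta _ C (c i)
       (if nat_of_ord i == 0%N then None else omap x (insub (nat_of_ord i).-1))
       (x i)
       (omap x (insub (nat_of_ord i).+1))].

Definition init (w : seq Sigma) : config (size w) :=
  [ffun i : 'I_(size w) => @inj _ C (tnth (in_tuple w) i)].

Fixpoint conf n (x0 : config n) (cs : nat -> coins n) (k : nat) : config n :=
  if k is k'.+1 then step (cs k') (conf x0 cs k') else x0.

Definition all_acc n (x : config n) : bool := [forall i, @acc _ C (x i)].

Definition coins_of n t (cs : t.-tuple (coins n)) : nat -> coins n :=
  fun j => nth [ffun => false] cs j.

Definition acc_within (w : seq Sigma) t (cs : t.-tuple (coins (size w))) : bool :=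
  [exists k : 'I_t.+1, all_acc (conf (init w) (coins_of cs) k)].

Definition acc_prob_within (w : seq Sigma) (t : nat) : Rdefinitions.R :=
  (#|[pred cs : t.-tuple (coins (size w)) | acc_within cs]|%:R
    / #|{: t.-tuple (coins (size w))}|%:R)%R.

(* probability that the computation on w is accepting (reaches A^n at some
   step): the limit (= supremum) of the increasing probabilities above *)
Definition acc_prob (w : seq Sigma) : Rdefinitions.R :=
  sup [set acc_prob_within w t | t in [set: nat]].

Definition constant_time : Prop :=
  exists T : nat, forall (w : seq Sigma) (cs : nat -> coins (size w)) (k : nat),
    all_acc (conf (init w) cs k) ->
    (forall j, (j < k)%N -> ~~ all_acc (conf (init w) cs j)) ->
    (k < T)%N.

(* C is a two-sided error PACA for L (so L(C) = L) *)
Definition two_sided_for (L : seq Sigma -> Prop) : Prop :=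
  forall w : seq Sigma,
    (L w -> (2 / 3 <= acc_prob w)%R) /\ (~ L w -> (acc_prob w <= 1 / 3)%R).

End PACA_semantics.

(* Main.v *)
Require Import Defs.
From HB Require Import structures.
From mathcomp Require Import all_boot all_order all_algebra.
From mathcomp Require Import classical_sets boolp reals Rstruct.
From mathcomp Require Import ring lra zify.
Set Implicit Arguments.
Unset Strict Implicit.
Unset Printing Implicit Defensive.
Import Order.TTheory GRing.Theory Num.Theory.
Delimit Scope ring_scope with ring.

Section Count.
Variable X : finType.

Lemma cat_tuple_inj a b :
  injective (fun xy : a.-tuple X * b.-tuple X => cat_tuple xy.1 xy.2).
Proof.
move=> [x1 y1] [x2 y2] /= /(congr1 val) /= /eqP.
rewrite eqseq_cat ?size_tuple // => /andP[/eqP e1 /eqP e2].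
by congr pair; apply: val_inj.
Qed.

Lemma card_split a b (P : {pred (a + b).-tuple X}) :
  #|P| = #|[pred xy : a.-tuple X * b.-tuple X | cat_tuple xy.1 xy.2 \in P]|.
Proof.
have bij : bijective (fun xy : a.-tuple X * b.-tuple X => cat_tuple xy.1 xy.2).
  apply: inj_card_bij; first exact: cat_tuple_inj.
  by rewrite card_prod !card_tuple expnD.
case: bij => g fg gf.
rewrite -(card_image (@cat_tuple_inj a b)).
apply: eq_card => z; apply/idP/idP.
  by move=> Pz; rewrite -[z]gf (fintype.mem_image (@cat_tuple_inj a b)) inE gf.
by case/fintype.imageP=> xy; rewrite inE => Pxy ->.
Qed.

End Count.

Section Generic.
Variables (Sigma : finType) (C : PACA Sigma).

Lemma conf_ext n (x0 : config C n) (cs cs' : nat -> coins n) k :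
  (forall j, j < k -> cs j = cs' j) -> conf x0 cs k = conf x0 cs' k.
Proof.
elim: k => [//|k IH] H /=.
by rewrite H // IH // => j jk; apply: H; apply: ltnW.
Qed.

Lemma coins_of_catl n a b (x : a.-tuple (coins n)) (y : b.-tuple (coins n)) j :
  j < a -> coins_of (cat_tuple x y) j = coins_of x j.
Proof. by move=> ja; rewrite /coins_of nth_cat size_tuple ja. Qed.

Lemma coins_of_catr n a b (x : a.-tuple (coins n)) (y : b.-tuple (coins n)) j :
  coins_of (cat_tuple x y) (a + j) = coins_of y j.
Proof. by rewrite /coins_of nth_cat size_tuple ltnNge leq_addr /= addKn. Qed.

Definition EV (w : seq Sigma) T (cs : nat -> coins (size w)) :=
  [exists k : 'I_T, all_acc (conf (init C w) cs k)].

Definition ct_with T := forall (w : seq Sigma) (cs : nat -> coins (size w)) (k : nat),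
    all_acc (conf (init C w) cs k) ->
    (forall j, (j < k)%N -> ~~ all_acc (conf (init C w) cs j)) ->
    (k < T)%N.

Variables (T : nat) (HT : ct_with T).

Lemma ct_first w (cs : nat -> coins (size w)) k :
  all_acc (conf (init C w) cs k) -> EV T cs.
Proof.
move=> H.
have ex : exists k, all_acc (conf (init C w) cs k) by exists k.
case: (ex_minnP ex) => m Hm Hmin.
have mT : m < T.
  apply: (HT Hm) => j jlt; apply/negP => Hj.
  by move: (Hmin _ Hj); rewrite leqNgt jlt.
by apply/existsP; exists (Ordinal mT).
Qed.

Lemma acc_within_EV w t (cs : t.-tuple (coins (size w))) :
  T <= t.+1 -> acc_within C cs = EV T (coins_of cs).
Proof.
move=> Tt; apply/existsP/idP.
  by case=> k /ct_first.
case/existsP=> k Hk.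
have kt : k < t.+1 by apply: leq_trans Tt.
by exists (Ordinal kt).
Qed.

Lemma EV_cat w a b (x : a.-tuple (coins (size w))) (y : b.-tuple (coins (size w))) :
  T <= a -> EV T (coins_of (cat_tuple x y)) = EV T (coins_of x).
Proof.
move=> Ta; apply: eq_existsb => k; congr all_acc; apply: conf_ext => j jk.
by apply: coins_of_catl; apply: leq_trans (ltn_trans jk (ltn_ord k)) Ta.
Qed.


Definition Aset w t := [pred cs : t.-tuple (coins (size w)) | acc_within C cs].

Lemma cardA_mono w a d :
  #|Aset w a| * #|coins (size w)| ^ d <= #|Aset w (a + d)|.
Proof.
rewrite (card_split (Aset w (a + d))) -card_tuple -cardX.
apply: subset_leq_card; apply/fintype.subsetP => -[x y].
rewrite !inE /= => /andP[/existsP[k Hk] _].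
have kad : k < (a + d).+1 by rewrite ltnS (leq_trans _ (leq_addr d a)) // -ltnS.
apply/existsP; exists (Ordinal kad) => /=.
rewrite (conf_ext _ (cs' := coins_of x)) // => j jk.
by apply: coins_of_catl; apply: leq_trans jk _; rewrite -ltnS.
Qed.

Lemma cardA_stable w a d : T <= a ->
  #|Aset w (a + d)| = #|Aset w a| * #|coins (size w)| ^ d.
Proof.
move=> Ta.
rewrite (card_split (Aset w (a + d))) -card_tuple -cardX.
apply: eq_card => -[x y]; rewrite !inE /= andbT.
rewrite (acc_within_EV _ (leq_trans Ta (leq_trans (leq_addr d a) (leqnSn _)))).
by rewrite EV_cat // -acc_within_EV // (leq_trans Ta).
Qed.

Lemma card_coins_gt0 n : 0 < #|coins n|.
Proof. by apply/card_gt0P; exists [ffun=> false]. Qed.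

Lemma accP_def w t : acc_prob_within C w t =
  (#|Aset w t|%:R / (#|coins (size w)| ^ t)%:R)%ring.
Proof. by rewrite /acc_prob_within card_tuple. Qed.

Lemma P_mono w a d : (acc_prob_within C w a <= acc_prob_within C w (a + d))%ring.
Proof.
rewrite !accP_def.
have c0 : (0 < (#|coins (size w)| ^ a)%:R :> Rdefinitions.R)%ring.
  by rewrite ltr0n expn_gt0 card_coins_gt0.
have c1 : (0 < (#|coins (size w)| ^ d)%:R :> Rdefinitions.R)%ring.
  by rewrite ltr0n expn_gt0 card_coins_gt0.
rewrite expnD.
have -> : (#|Aset w a|%:R / (#|coins (size w)| ^ a)%:R =
   (#|Aset w a| * #|coins (size w)| ^ d)%:R /
   (#|coins (size w)| ^ a * #|coins (size w)| ^ d)%:R :> Rdefinitions.R)%ring.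
  by rewrite !natrM; field; rewrite !gt_eqF.
by rewrite ler_pM2r ?invr_gt0 ?ltr0n ?muln_gt0 ?expn_gt0 ?card_coins_gt0 // ler_nat cardA_mono.
Qed.

Lemma P_stable w a d : T <= a -> acc_prob_within C w (a + d) = acc_prob_within C w a.
Proof.
move=> Ta; rewrite !accP_def cardA_stable // expnD !natrM.
have c0 : ((#|coins (size w)| ^ a)%:R != 0 :> Rdefinitions.R)%ring.
  by rewrite pnatr_eq0 -lt0n expn_gt0 card_coins_gt0.
have c1 : ((#|coins (size w)| ^ d)%:R != 0 :> Rdefinitions.R)%ring.
  by rewrite pnatr_eq0 -lt0n expn_gt0 card_coins_gt0.
by field; rewrite c0 c1.
Qed.

Lemma acc_prob_T w : acc_prob C w = acc_prob_within C w T.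
Proof.
have ub : forall t, (acc_prob_within C w t <= acc_prob_within C w T)%ring.
  move=> t; case: (leqP t T) => tT.
    by rewrite -(subnKC tT) P_mono.
  by rewrite -(subnKC (ltnW tT)) P_stable.
apply/eqP; rewrite eq_le; apply/andP; split.
  apply: ge_sup; first by exists (acc_prob_within C w 0); exists 0.
  by move=> x [t _ <-].
apply: ub_le_sup; last by exists T.
by exists (acc_prob_within C w T) => x [t _ <-].
Qed.

Lemma acc_prob_within_01 w t :
  (0 <= acc_prob_within C w t <= 1)%ring.
Proof.
rewrite accP_def divr_ge0 ?ler0n //= ler_pdivrMr ?mul1r ?ler_nat.
  by rewrite -card_tuple max_card.
by rewrite ltr0n expn_gt0 card_coins_gt0.
Qed.

Lemma acc_prob_nil w : size w = 0 -> acc_prob C w = 1%R.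
Proof.
move=> w0; rewrite acc_prob_T accP_def.
rewrite -card_tuple (eq_card (B := predT)) ?divff // => [|cs].
  by rewrite pnatr_eq0 -lt0n card_tuple expn_gt0 card_coins_gt0.
rewrite !inE; apply/existsP; exists ord0; apply/forallP => i.
by move: (ltn_ord i); rewrite {2}w0.
Qed.

End Generic.

Lemma omap_ext2 (A B I : Type) (f : A -> B) (x : I -> A) (y : I -> B) o :
  (forall j, f (x j) = y j) -> omap f (omap x o) = omap y o.
Proof. by move=> H; case: o => //= j; rewrite H. Qed.

Section Seq.
Variables (Sigma : finType) (C D : PACA Sigma) (TC TD : nat) (Sl : finType).
Variables (u : Sl -> option 'I_TC) (v : Sl -> option 'I_TD).

Definition MM := TC + TD + #|Sl|.
Definition QS := ('I_MM.+1 * Q C * Q D * {ffun 'I_TC -> bool} * {ffun 'I_TD -> bool})%type.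
Definition tau (x : QS) : nat := x.1.1.1.1.
Definition qc (x : QS) : Q C := x.1.1.1.2.
Definition qd (x : QS) : Q D := x.1.1.2.
Definition rc (x : QS) := x.1.2.
Definition rd (x : QS) := x.2.
Definition nxt (x : QS) : 'I_MM.+1 := inord (minn (tau x).+1 MM).

Definition okS s (r1 : {ffun 'I_TC -> bool}) (r2 : {ffun 'I_TD -> bool}) :=
  (if u s is Some j then r1 j else true) && (if v s is Some j then r2 j else true).

Definition accS (x : QS) : bool :=
  [&& TC + TD <= tau x, tau x < MM &
   [exists s, (enum_rank s == tau x - (TC + TD) :> nat) && okS s (rc x) (rd x)]].

Definition deltaS (b : bool) (l : option QS) (x : QS) (r : option QS) : QS :=
  if tau x < TC then
    (nxt x, @delta _ C b (omap qc l) (qc x) (omap qc r), qd x,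
     [ffun j : 'I_TC => if j == tau x :> nat then @acc _ C (qc x) else rc x j], rd x)
  else if tau x < TC + TD then
    (nxt x, qc x, @delta _ D b (omap qd l) (qd x) (omap qd r), rc x,
     [ffun j : 'I_TD => if j == tau x - TC :> nat then @acc _ D (qd x) else rd x j])
  else (nxt x, qc x, qd x, rc x, rd x).

Definition injS (a : Sigma) : QS := (ord0, @inj _ C a, @inj _ D a, [ffun=> false], [ffun=> false]).

Lemma injS_inj : injective injS.
Proof. by move=> a b [] /(@inj_injective _ C). Qed.

Definition SeqP : PACA Sigma := @MkPACA Sigma QS injS injS_inj accS deltaS.

Section Run.
Variables (w : seq Sigma) (cs : nat -> coins (size w)).
Let n := size w.
Definition xS k : config SeqP n := conf (init SeqP w) cs k.
Definition xC k : config C n := conf (init C w) cs k.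
Definition csD j := cs (TC + j).
Definition xD k : config D n := conf (init D w) csD k.

Definition Inv k := forall i : 'I_n,
  [/\ tau (xS k i) = minn k MM, qc (xS k i) = xC (minn k TC) i,
      qd (xS k i) = xD (minn (k - TC) TD) i,
      (forall j : 'I_TC, rc (xS k i) j = (j < k) && @acc _ C (xC j i)) &
      (forall j : 'I_TD, rd (xS k i) j = (TC + j < k) && @acc _ D (xD j i))].

Lemma Inv0 : Inv 0.
Proof.
move=> i; rewrite /xS /xC /xD /= !ffunE /=.
by split; rewrite ?sub0n ?min0n /= ?ffunE // => j; rewrite ffunE.
Qed.


Lemma xS_step k i : xS k.+1 i = deltaS (cs k i)
  (if i == 0 :> nat then None else omap (xS k) (insub i.-1)) (xS k i)
  (omap (xS k) (insub i.+1)).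
Proof. by rewrite /xS /= /step ffunE. Qed.

Lemma xC_step k i : xC k.+1 i = @delta _ C (cs k i)
  (if i == 0 :> nat then None else omap (xC k) (insub i.-1)) (xC k i)
  (omap (xC k) (insub i.+1)).
Proof. by rewrite /xC /= /step ffunE. Qed.

Lemma xD_step k i : xD k.+1 i = @delta _ D (csD k i)
  (if i == 0 :> nat then None else omap (xD k) (insub i.-1)) (xD k i)
  (omap (xD k) (insub i.+1)).
Proof. by rewrite /xD /= /step ffunE. Qed.

Lemma omap_if (A B : Type) (f : A -> B) (b : bool) o :
  omap f (if b then None else o) = if b then None else omap f o.
Proof. by case: b. Qed.

Lemma InvS k : Inv k -> Inv k.+1.
Proof.
move=> H i; have [t1 q1 q2 r1 r2] := H i.
have HC : forall j, qc (xS k j) = xC (minn k TC) j by move=> j; case: (H j).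
have HD : forall j, qd (xS k j) = xD (minn (k - TC) TD) j by move=> j; case: (H j).
rewrite xS_step /deltaS t1.
have TM : TC + TD <= MM by rewrite /MM leq_addr.
have nx : (nxt (xS k i) : nat) = minn k.+1 MM.
  rewrite /nxt inordK t1; last by rewrite ltnS geq_minr.
  lia.
case: (ltnP k TC) => kTC.
  have -> : minn k MM < TC by rewrite (leq_ltn_trans (geq_minl _ _)).
  split; first exact: nx.
  - have -> : minn k.+1 TC = k.+1 by apply/minn_idPl.
    rewrite q1 xC_step (minn_idPl (ltnW kTC)).
    by rewrite omap_if !(omap_ext2 _ HC) (minn_idPl (ltnW kTC)).
  - rewrite q2; congr (xD _ i).
    lia.
  - move=> j; rewrite ffunE /= r1 (minn_idPl (leq_trans (ltnW kTC) (leq_trans (leq_addr _ _) TM))).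
    case: (eqVneq (j : nat) k) => [ej | nej].
      by rewrite ej ltnSn q1 (minn_idPl (ltnW kTC)).
    by congr andb; move/eqP: nej; lia.
  - move=> j; rewrite r2; congr andb; lia.
have -> : minn k MM < TC = false by apply/negbTE; rewrite -leqNgt leq_min kTC (leq_trans (leq_addr _ _) TM).
case: (ltnP k (TC + TD)) => kTD.
  have mk : minn k MM = k by lia.
  rewrite mk kTD; split; first exact: nx.
  - by rewrite q1 (minn_idPr kTC) (minn_idPr (leq_trans kTC (leqnSn _))).
  - have -> : minn (k.+1 - TC) TD = (k - TC).+1 by lia.
    rewrite q2 xD_step (minn_idPl _); last by lia.
    rewrite omap_if !(omap_ext2 _ HD) (minn_idPl _) /csD ?subnKC //; last by lia.
  - by move=> j; have jl := ltn_ord j; rewrite r1; congr andb; lia.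
  - move=> j; rewrite ffunE /= r2.
    case: eqP => [ej | nej].
      rewrite -(minn_idPl (ltnW (ltn_ord j))) q2 ej (minn_idPl _); last by lia.
      by rewrite subnKC // ltnSn.
    by congr andb; lia.
have mk : minn k MM >= TC + TD by rewrite leq_min kTD.
rewrite ltnNge mk /=; split; first exact: nx.
- by rewrite q1 (minn_idPr kTC) (minn_idPr (leq_trans kTC (leqnSn _))).
- by rewrite q2 !(minn_idPr _) //; lia.
- by move=> j; have jl := ltn_ord j; rewrite r1; congr andb; lia.
- by move=> j; have jl := ltn_ord j; rewrite r2; congr andb; lia.
Qed.


Lemma Inv_all k : Inv k.
Proof. by elim: k => [|k IH]; [exact: Inv0 | exact: InvS]. Qed.

Definition OK s :=
  (if u s is Some j then all_acc (xC j) else true) &&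
  (if v s is Some j then all_acc (xD j) else true).

Lemma all_accS k : 0 < n -> all_acc (xS k) =
  [&& TC + TD <= k, k < MM &
   [exists s, (enum_rank s == k - (TC + TD) :> nat) && OK s]].
Proof.
move=> n0; have HI := Inv_all k.
have TM : TC + TD <= MM by rewrite /MM leq_addr.
case: (boolP ((TC + TD <= k) && (k < MM))) => [/andP[k1 k2] | nk]; last first.
  have -> : [&& TC + TD <= k, k < MM & [exists s, (enum_rank s == k - (TC + TD) :> nat) && OK s]] = false.
    by apply/negbTE; move: nk; apply: contra => /and3P[-> ->].
  apply/negbTE/forallPn; exists (Ordinal n0).
  have [t1 _ _ _ _] := HI (Ordinal n0).
  rewrite /= /accS t1; move: nk; apply: contra => /and3P[a1 a2 _].
  by apply/andP; split; lia.
rewrite k1 k2 /=.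
have mk : minn k MM = k by lia.
have RC : forall i (j : 'I_TC), rc (xS k i) j = @acc _ C (xC j i).
  move=> i j; have [_ _ _ r1 _] := HI i; rewrite r1.
  by rewrite (leq_trans (ltn_ord j) (leq_trans (leq_addr TD TC) k1)).
have RD : forall i (j : 'I_TD), rd (xS k i) j = @acc _ D (xD j i).
  move=> i j; have [_ _ _ _ r2] := HI i; rewrite r2.
  by rewrite (leq_trans _ k1) // ltn_add2l.
have AI : forall i, @acc _ SeqP (xS k i) =
  [exists s, (enum_rank s == k - (TC + TD) :> nat) &&
    ((if u s is Some j then @acc _ C (xC j i) else true) &&
     (if v s is Some j then @acc _ D (xD j i) else true))].
  move=> i; have [t1 _ _ _ _] := HI i.
  rewrite /= /accS t1 mk k1 k2 /=; apply: eq_existsb => s; rewrite /okS.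
  by case: (u s) => [j|]; case: (v s) => [j'|]; rewrite ?RC ?RD.
apply/forallP/existsP.
  move=> H; have := H (Ordinal n0); rewrite AI => /existsP[s /andP[rs _]].
  exists s; rewrite rs /= /OK.
  have Hs : forall i, (if u s is Some j then @acc _ C (xC j i) else true) &&
     (if v s is Some j then @acc _ D (xD j i) else true).
    move=> i; have := H i; rewrite AI => /existsP[s' /andP[rs' ok]].
    have ss : s' = s.
      apply: enum_rank_inj; apply: val_inj => /=.
      by rewrite (eqP rs') (eqP rs).
    by rewrite -ss.
  apply/andP; split.
    case: (u s) Hs => [j|] Hs //; apply/forallP => i.
    by have /andP[] := Hs i.
  case: (v s) Hs => [j|] Hs //; apply/forallP => i.
  by have /andP[] := Hs i.
case=> s /andP[rs /andP[o1 o2]] i; rewrite AI; apply/existsP; exists s.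
rewrite rs /=; apply/andP; split.
  by case: (u s) o1 => // j /forallP.
by case: (v s) o2 => // j /forallP.
Qed.

End Run.

Lemma ct_Seq : ct_with SeqP MM.+1.
Proof.
move=> w cs k Hk Hmin.
case: (posnP (size w)) => [n0 | n0].
  case: k Hk Hmin => // k _ Hmin.
  have := Hmin 0 (ltn0Sn _); rewrite /all_acc.
  by move/negP; case; apply/forallP => i; move: (ltn_ord i); rewrite {2}n0.
move: Hk; rewrite -/(xS cs k) all_accS // => /and3P[_ kM _].
by apply: (leq_trans kM); apply: leqnSn.
Qed.

Definition OKx w a b (x : a.-tuple (coins (size w))) (y : b.-tuple (coins (size w))) s :=
  (if u s is Some j then all_acc (conf (init C w) (coins_of x) j) else true) &&
  (if v s is Some j then all_acc (conf (init D w) (coins_of y) j) else true).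

Lemma accS_cat w R (x : TC.-tuple (coins (size w))) (y : R.-tuple (coins (size w))) :
  0 < size w -> MM <= TC + R ->
  acc_within SeqP (cat_tuple x y) = [exists s, OKx x y s].
Proof.
move=> n0 ML.
set cs := coins_of (cat_tuple x y).
have eC : forall j : 'I_TC, xC cs j = conf (init C w) (coins_of x) j.
  move=> j; apply: conf_ext => l lj; apply: coins_of_catl.
  exact: ltn_trans lj (ltn_ord j).
have eD : forall j : 'I_TD, xD cs j = conf (init D w) (coins_of y) j.
  by move=> j; apply: conf_ext => l lj; rewrite /csD /cs coins_of_catr.
have eOK : forall s, OK cs s = OKx x y s.
  by move=> s; rewrite /OK /OKx; case: (u s) => [j|]; case: (v s) => [j'|];
    rewrite ?eC ?eD.
apply/existsP/existsP.
  case=> k; rewrite -/(xS cs k) all_accS // => /and3P[_ _ /existsP[s /andP[_ ok]]].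
  by exists s; rewrite -eOK.
case=> s ok.
have h2 : (enum_rank s : nat) < #|Sl| := ltn_ord _.
have kl : TC + TD + enum_rank s < (TC + R).+1.
  rewrite /MM in ML; lia.
exists (Ordinal kl); rewrite /= -/(xS cs _) all_accS //.
rewrite leq_addr /= addKn; apply/andP; split.
  by rewrite /MM ltn_add2l.
by apply/existsP; exists s; rewrite eqxx eOK ok.
Qed.

End Seq.

Section Comb.
Variables (Sigma : finType) (C D : PACA Sigma) (TC TD : nat).
Hypotheses (HC : ct_with C TC) (HD : ct_with D TD).

Definition SlA : finType := ('I_TC * 'I_TD)%type.
Definition uA (s : SlA) : option 'I_TC := Some s.1.
Definition vA (s : SlA) : option 'I_TD := Some s.2.
Definition SA := SeqP C D uA vA.

Lemma SA_key w R (x : TC.-tuple (coins (size w))) (y : R.-tuple (coins (size w))) :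
  0 < size w -> MM TC TD SlA <= TC + R -> TD <= R.+1 ->
  acc_within SA (cat_tuple x y) = acc_within C x && acc_within D y.
Proof.
move=> n0 ML TR.
rewrite accS_cat // (acc_within_EV HC) // ?leqnSn // (acc_within_EV HD) //.
apply/existsP/andP.
  by case=> -[k1 k2] /andP[/= a1 a2]; split; apply/existsP; [exists k1 | exists k2].
by case=> /existsP[k1 a1] /existsP[k2 a2]; exists (k1, k2); rewrite /OKx /= a1 a2.
Qed.

Lemma SA_prob w : acc_prob SA w = (acc_prob C w * acc_prob D w)%ring.
Proof.
case: (posnP (size w)) => n0.
  by rewrite (acc_prob_nil (@ct_Seq _ C D _ _ _ uA vA)) // (acc_prob_nil HC) //
    (acc_prob_nil HD) // mulr1.
set R' := TD + #|SlA|.+1.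
have e : (MM TC TD SlA).+1 = TC + R' by rewrite /R' /MM; lia.
rewrite (acc_prob_T (@ct_Seq _ C D _ _ _ uA vA)) e (acc_prob_T HC) (acc_prob_T HD).
rewrite -(P_stable HD w #|SlA|.+1 (leqnn TD)) -/R' !accP_def.
have cnt : #|Aset SA w (TC + R')| = #|Aset C w TC| * #|Aset D w R'|.
  rewrite card_split -cardX; apply: eq_card => -[x y].
  rewrite !inE /= SA_key //.
    by rewrite /R' /MM; lia.
  by rewrite /R'; lia.
have c0 : forall k, ((#|coins (size w)| ^ k)%:R != 0 :> Rdefinitions.R)%ring.
  by move=> k; rewrite pnatr_eq0 -lt0n expn_gt0 card_coins_gt0.
rewrite cnt expnD !natrM; field.
by rewrite !c0.
Qed.

Definition SlO : finType := ('I_TC + 'I_TD)%type.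
Definition uO (s : SlO) : option 'I_TC := if s is inl k then Some k else None.
Definition vO (s : SlO) : option 'I_TD := if s is inr k then Some k else None.
Definition SO := SeqP C D uO vO.

Lemma SO_key w R (x : TC.-tuple (coins (size w))) (y : R.-tuple (coins (size w))) :
  0 < size w -> MM TC TD SlO <= TC + R -> TD <= R.+1 ->
  acc_within SO (cat_tuple x y) = acc_within C x || acc_within D y.
Proof.
move=> n0 ML TR.
rewrite accS_cat // (acc_within_EV HC) // ?leqnSn // (acc_within_EV HD) //.
apply/existsP/orP.
  case=> -[k|k]; rewrite /OKx /= ?andbT => a; [left | right];
    by apply/existsP; exists k.
by case=> /existsP[k a]; [exists (inl k) | exists (inr k)]; rewrite /OKx /= a.
Qed.

Lemma SO_prob w : acc_prob SO w =
  (acc_prob C w + acc_prob D w - acc_prob C w * acc_prob D w)%ring.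
Proof.
case: (posnP (size w)) => n0.
  rewrite (acc_prob_nil (@ct_Seq _ C D _ _ _ uO vO)) // (acc_prob_nil HC) //
    (acc_prob_nil HD) //; ring.
set R' := TD + #|SlO|.+1.
have e : (MM TC TD SlO).+1 = TC + R' by rewrite /R' /MM; lia.
rewrite (acc_prob_T (@ct_Seq _ C D _ _ _ uO vO)) e (acc_prob_T HC) (acc_prob_T HD).
rewrite -(P_stable HD w #|SlO|.+1 (leqnn TD)) -/R' !accP_def.
set a := #|Aset C w TC|; set b := #|Aset D w R'|.
set N1 := #|coins (size w)| ^ TC; set N2 := #|coins (size w)| ^ R'.
have cnt : #|Aset SO w (TC + R')| + a * b = a * N2 + N1 * b.
  rewrite card_split.
  have -> : a * b = #|[predX Aset C w TC & Aset D w R']| by rewrite cardX.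
  have -> : a * N2 = #|[predX Aset C w TC & (predT : pred (R'.-tuple (coins (size w))))]|.
    by rewrite cardX /N2 -card_tuple.
  have -> : N1 * b = #|[predX (predT : pred (TC.-tuple (coins (size w)))) & Aset D w R']|.
    by rewrite cardX /N1 -card_tuple.
  have K1 : MM TC TD SlO <= TC + R' by rewrite /R' /MM; lia.
  have K2 : TD <= R'.+1 by rewrite /R'; lia.
  rewrite -[RHS]cardUI; congr addn; apply: eq_card => -[x y]; rewrite !inE /=.
    by rewrite SO_key // andbT.
  by rewrite andbT.
have c0 : forall k, ((#|coins (size w)| ^ k)%:R != 0 :> Rdefinitions.R)%ring.
  by move=> k; rewrite pnatr_eq0 -lt0n expn_gt0 card_coins_gt0.
have cntR : (#|Aset SO w (TC + R')|%:R =
   a%:R * N2%:R + N1%:R * b%:R - a%:R * b%:R :> Rdefinitions.R)%ring.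
  by rewrite -!natrM -natrD -cnt natrD addrK.
rewrite cntR expnD natrM -/N1 -/N2; field.
by rewrite !c0.
Qed.

End Comb.

Lemma and_ex (Sigma : finType) (C D : PACA Sigma) :
  constant_time C -> constant_time D ->
  exists S : PACA Sigma, constant_time S /\
    forall w, acc_prob S w = (acc_prob C w * acc_prob D w)%ring.
Proof.
case=> TC HC [TD HD]; exists (SA C D TC TD); split; last exact: SA_prob.
by eexists; apply: ct_Seq.
Qed.

Lemma or_ex (Sigma : finType) (C D : PACA Sigma) :
  constant_time C -> constant_time D ->
  exists S : PACA Sigma, constant_time S /\
    forall w, acc_prob S w =
      (acc_prob C w + acc_prob D w - acc_prob C w * acc_prob D w)%ring.
Proof.
case=> TC HC [TD HD]; exists (SO C D TC TD); split; last exact: SO_prob.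
by eexists; apply: ct_Seq.
Qed.

Local Open Scope ring_scope.

Definition orf (x y : Rdefinitions.R) := x + y - x * y.
Definition hf (p : Rdefinitions.R) :=
  let o := orf p p in let k := o * o in let a := k * k in orf a a.

Lemma orf01 (x y : Rdefinitions.R) : 0 <= x <= 1 -> 0 <= y <= 1 -> 0 <= orf x y <= 1.
Proof. rewrite /orf => /andP[? ?] /andP[? ?]; apply/andP; split; nra. Qed.

Lemma mul01 (x y : Rdefinitions.R) : 0 <= x <= 1 -> 0 <= y <= 1 -> 0 <= x * y <= 1.
Proof. move=> /andP[? ?] /andP[? ?]; apply/andP; split; nra. Qed.

Lemma hf01 (p : Rdefinitions.R) : 0 <= p <= 1 -> 0 <= hf p <= 1.
Proof.
move=> hp; rewrite /hf.
have ho := orf01 hp hp.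
have hk := mul01 ho ho.
have hq := mul01 hk hk.
exact: (orf01 hq hq).
Qed.

Lemma hf_hi (p : Rdefinitions.R) : 2/3 <= p <= 1 -> 17/20 <= hf p.
Proof.
move=> /andP[p1 p2]; rewrite /hf /orf.
set o := p + p - p * p.
have o1 : 8/9 <= o <= 1 by apply/andP; split; rewrite /o; nra.
set k := o * o.
have k1 : 64/81 <= k <= 1 by case/andP: o1 => ? ?; apply/andP; split; rewrite /k; nra.
set a := k * k.
have a1 : 4096/6561 <= a <= 1 by case/andP: k1 => ? ?; apply/andP; split; rewrite /a; nra.
case/andP: a1 => ? ?; nra.
Qed.

Lemma hf_lo (p : Rdefinitions.R) : 0 <= p <= 1/3 -> hf p <= 91/500.
Proof.
move=> /andP[p1 p2]; rewrite /hf /orf.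
set o := p + p - p * p.
have o1 : 0 <= o <= 5/9 by apply/andP; split; rewrite /o; nra.
set k := o * o.
have k1 : 0 <= k <= 25/81 by case/andP: o1 => ? ?; apply/andP; split; rewrite /k; nra.
set a := k * k.
have a1 : 0 <= a <= 625/6561 by case/andP: k1 => ? ?; apply/andP; split; rewrite /a; nra.
case/andP: a1 => ? ?; nra.
Qed.

Lemma p01 (Sigma : finType) (C : PACA Sigma) : constant_time C ->
  forall w, 0 <= acc_prob C w <= 1.
Proof. by case=> T HT w; rewrite (acc_prob_T HT); apply: acc_prob_within_01. Qed.

Lemma amp (Sigma : finType) (C : PACA Sigma) : constant_time C ->
  exists H : PACA Sigma, constant_time H /\ forall w, acc_prob H w = hf (acc_prob C w).
Proof.
move=> cC.
have [O [cO pO]] := or_ex cC cC.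
have [K [cK pK]] := and_ex cO cO.
have [A [cA pA]] := and_ex cK cK.
have [H [cH pH]] := or_ex cA cA.
exists H; split => // w.
by rewrite pH pA pK pO.
Qed.

Theorem mainTheorem11 (Sigma : finType) (C1 C2 : PACA Sigma)
    (L1 L2 : seq Sigma -> Prop) :
  constant_time C1 -> two_sided_for C1 L1 ->
  constant_time C2 -> two_sided_for C2 L2 ->
  (exists Cu : PACA Sigma,
      constant_time Cu /\ two_sided_for Cu (fun w => L1 w \/ L2 w)) /\
  (exists Ci : PACA Sigma,
      constant_time Ci /\ two_sided_for Ci (fun w => L1 w /\ L2 w)).
Proof.
move=> c1 t1 c2 t2.
have [H1 [cH1 pH1]] := amp c1.
have [H2 [cH2 pH2]] := amp c2.
have q1 := p01 c1; have q2 := p01 c2.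
have hi1 : forall w, L1 w -> 17/20 <= acc_prob H1 w.
  move=> w Lw; rewrite pH1; apply: hf_hi.
  by have /andP[_ ->] := q1 w; rewrite andbT; case: (t1 w) => /(_ Lw).
have hi2 : forall w, L2 w -> 17/20 <= acc_prob H2 w.
  move=> w Lw; rewrite pH2; apply: hf_hi.
  by have /andP[_ ->] := q2 w; rewrite andbT; case: (t2 w) => /(_ Lw).
have lo1 : forall w, ~ L1 w -> acc_prob H1 w <= 91/500.
  move=> w Lw; rewrite pH1; apply: hf_lo.
  by have /andP[-> _] := q1 w; case: (t1 w) => _ /(_ Lw).
have lo2 : forall w, ~ L2 w -> acc_prob H2 w <= 91/500.
  move=> w Lw; rewrite pH2; apply: hf_lo.
  by have /andP[-> _] := q2 w; case: (t2 w) => _ /(_ Lw).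
have r1 : forall w, 0 <= acc_prob H1 w <= 1 by move=> w; rewrite pH1; apply: hf01.
have r2 : forall w, 0 <= acc_prob H2 w <= 1 by move=> w; rewrite pH2; apply: hf01.
split.
  have [U [cU pU]] := or_ex cH1 cH2.
  exists U; split => // w; rewrite pU.
  have /andP[a1 b1] := r1 w; have /andP[a2 b2] := r2 w.
  split.
    case=> Lw; [have := hi1 w Lw | have := hi2 w Lw] => h; nra.
  move=> nL.
  have l1 := lo1 w (fun h => nL (or_introl h)).
  have l2 := lo2 w (fun h => nL (or_intror h)).
  nra.
have [I [cI pI]] := and_ex cH1 cH2.
exists I; split => // w; rewrite pI.
have /andP[a1 b1] := r1 w; have /andP[a2 b2] := r2 w.
split.
  case=> La Lb; have h1 := hi1 w La; have h2 := hi2 w Lb; nra.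
move=> nL; case: (pselect (L1 w)) => La.
  have l2 := lo2 w (fun h => nL (conj La h)); nra.
have l1 := lo1 w La; nra.
Qed.
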